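(* Let $\mathfrak g$ be of type $A_n$, and for $i\in I$, $b\in\mathcal B(\infty)$ set $\mathrm{jump}_i(b)=\varepsilon_i(b)+\varepsilon_i^\ast(b)+\langle h_i,\mathrm{wt}(b)\rangle$. Then for all $i\in I$ and $b\in\mathcal B(\infty)$: (1) $\mathrm{jump}_i(b)=(\varepsilon_i(b)-\Sigma_1(b))+(\varepsilon_i^\ast(b)-\Sigma_1^\ast(b))$; in particular $\mathrm{jump}_i(b)\ge0$. (2) If $\mathrm{jump}_i(b)=0$, then $\widetilde f_i(b)=\widetilde f_i^\ast(b)$.
   Context: $I=\{1,\dots,n\}$, $\langle h_i,\alpha_j\rangle=2$ if $i=j$, $-1$ if $|i-j|=1$, $0$ otherwise. $\mathcal I=\{(s,t)\in\mathbb Z_{>0}\times I:s+t\le n+1\}$; $\mathcal B(\infty)$ is the set of $b=(b_{s,t})_{(s,t)\in\mathcal I}\in\mathbb Z_{\ge0}^{\mathcal I}$ with $b_{1,k}\ge b_{2,k-1}\ge\dots\ge b_{k,1}$ for $1\le k\le n$. Convention: $b_{s,t}=0$, $\mathbf e_{s,t}=0$ for $(s,t)\notin\mathcal I$. $\mathrm{wt}(b)=-\sum b_{s,t}\alpha_t$. $\partial_{s,t}(b)=b_{s,t}-b_{s,t+1}-b_{s+1,t-1}+b_{s+1,t}$, $\partial^\ast_{s,t}(b)=b_{s-1,t}-b_{s-1,t+1}-b_{s,t-1}+b_{s,t}$. For $1\le k\le n+1-i$: $\Sigma_k(b)=\sum_{s=k}^{n+1-i}\partial_{s,i}(b)$,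 $\varepsilon_i(b)=\max_k\Sigma_k(b)$, $m_i(b)$ the smallest maximizing $k$, $\widetilde f_i(b)=b+\mathbf e_{m_i(b),i}$. For $1\le k\le i$: $\Sigma^\ast_k(b)=\sum_{t=1}^k\partial^\ast_{t,i+1-t}(b)$, $\varepsilon_i^\ast(b)=\max_k\Sigma^\ast_k(b)$, $m_i^\ast(b)$ the smallest maximizing $k$, $\widetilde f_i^\ast(b)=b+\sum_{t=1}^{m_i^\ast(b)}(\mathbf e_{t,i+1-t}-\mathbf e_{t-1,i+1-t})$. *)

(* Defs.v *)
From mathcomp Require Import all_boot all_order all_algebra.
Set Implicit Arguments. Unset Strict Implicit. Unset Printing Implicit Defensive.
Import Order.TTheory GRing.Theory Num.Theory.
Local Open Scope ring_scope.

Definition inI (n s t : nat) : bool :=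
  [&& (0 < s)%N, (0 < t)%N, (t <= n)%N & (s + t <= n.+1)%N].

(* An element b is represented as a function nat -> nat -> int;
   coordinates outside \mathcal I are read as 0 (the paper's convention). *)
Definition bv (n : nat) (b : nat -> nat -> int) (s t : nat) : int :=
  if inI n s t then b s t else 0.

Definition inBinf (n : nat) (b : nat -> nat -> int) : Prop :=
  (forall s t, ~~ inI n s t -> b s t = 0) /\
  (forall s t, inI n s t -> 0 <= b s t) /\
  (forall k s, (1 <= k <= n)%N -> (1 <= s)%N -> (s < k)%N ->
     b s.+1 (k - s)%N <= b s (k.+1 - s)%N).

Definition cartanA (i j : nat) : int :=
  if i == j then 2 else if (i == j.+1) || (j == i.+1) then -1 else 0.

(* <h_i, wt(b)>,  wt(b) = - sum_{(s,t) in I} b_{s,t} alpha_t *)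
Definition pair_wt (n i : nat) (b : nat -> nat -> int) : int :=
  - \sum_(1 <= s < n.+1) \sum_(1 <= t < n.+1)
      (if inI n s t then bv n b s t * cartanA i t else 0).

Definition ev (n s t : nat) : nat -> nat -> int :=
  fun s' t' => if inI n s t && (s' == s) && (t' == t) then 1 else 0.

Definition partial (n : nat) (b : nat -> nat -> int) (s t : nat) : int :=
  bv n b s t - bv n b s t.+1 - bv n b s.+1 t.-1 + bv n b s.+1 t.

Definition partial_star (n : nat) (b : nat -> nat -> int) (s t : nat) : int :=
  bv n b s.-1 t - bv n b s.-1 t.+1 - bv n b s t.-1 + bv n b s t.

Definition Sigma (n i : nat) (b : nat -> nat -> int) (k : nat) : int :=
  \sum_(k <= s < (n.+1 - i).+1) partial n b s i.

Definition Sigma_star (n i : nat) (b : nat -> nat -> int) (k : nat) : int :=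
  \sum_(1 <= t < k.+1) partial_star n b t (i.+1 - t).

Definition max_range (L : nat) (f : nat -> int) : int :=
  foldr Num.max (f 1%N) [seq f k | k <- iota 1 L].

Definition argmax_range (L : nat) (f : nat -> int) : nat :=
  (find (fun k => f k == max_range L f) (iota 1 L)).+1.

Definition eps (n i : nat) b := max_range (n.+1 - i) (Sigma n i b).
Definition m_i (n i : nat) b := argmax_range (n.+1 - i) (Sigma n i b).
Definition eps_star (n i : nat) b := max_range i (Sigma_star n i b).
Definition m_star (n i : nat) b := argmax_range i (Sigma_star n i b).

Definition f_tilde (n i : nat) (b : nat -> nat -> int) : nat -> nat -> int :=
  fun s t => b s t + ev n (m_i n i b) i s t.

Definition f_tilde_star (n i : nat) (b : nat -> nat -> int) : nat -> nat -> int :=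
  fun s t => b s t + \sum_(1 <= u < (m_star n i b).+1)
                       (ev n u (i.+1 - u) s t - ev n u.-1 (i.+1 - u) s t).

Definition jump (n i : nat) (b : nat -> nat -> int) : int :=
  eps n i b + eps_star n i b + pair_wt n i b.

(* Main.v *)
Require Import Defs.
From mathcomp Require Import all_boot all_order all_algebra.
From mathcomp Require Import zify ring lra.
Import Order.TTheory GRing.Theory Num.Theory.
Local Open Scope ring_scope.

Lemma foldr_max_ge (x : int) s : x <= foldr Num.max x s.
Proof. elim: s => //= a s IH; by rewrite le_max IH orbT. Qed.

Lemma max_range_ge L f : f 1%N <= max_range L f.
Proof. exact: foldr_max_ge. Qed.

Lemma argmax_range1 L f : (0 < L)%N -> f 1%N = max_range L f -> argmax_range L f = 1%N.
Proof.
case: L => [//|L] _ H; rewrite /argmax_range /= -H eqxx //.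
Qed.

Lemma sum_if_eq (g : nat -> int) a c x :
  \sum_(a <= t < c) (if t == x then g t else 0) = if (a <= x < c)%N then g x else 0.
Proof.
elim: c => [|c IH]; first by rewrite big_geq //; case: ifP => //; lia.
case: (leqP a c) => hac.
  rewrite big_nat_recr //= IH.
  case: (eqVneq c x) hac => [->|ne] hac.
    have -> : (a <= x < x)%N = false by lia.
    by rewrite add0r; have -> : (a <= x < x.+1)%N by lia.
  move/eqP: ne => ne; rewrite addr0; congr (if _ then _ else _); apply/idP/idP; lia.
rewrite big_geq; last lia. case: ifP => //; lia.
Qed.

Lemma sum_supp (g : nat -> int) a c lo hi :
  (a <= lo)%N -> (lo <= hi)%N -> (hi <= c)%N ->
  (forall s, (s < lo)%N \/ (hi <= s)%N -> g s = 0) ->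
  \sum_(a <= s < c) g s = \sum_(lo <= s < hi) g s.
Proof.
move=> h1 h2 h3 hz.
rewrite (@big_cat_nat _ _ _ lo a c) //=; last lia.
rewrite (@big_cat_nat _ _ _ hi lo c) //=.
rewrite big1_seq ?add0r; last by move=> s /andP[_]; rewrite mem_index_iota => hs; apply: hz; lia.
rewrite [X in _ + X]big1_seq ?addr0 //.
by move=> s /andP[_]; rewrite mem_index_iota => hs; apply: hz; lia.
Qed.
Lemma cartan_split (i t : nat) (x : int) : (1 <= i)%N ->
  x * cartanA i t = (if t == i then x *+ 2 else 0) - (if t == i.-1 then x else 0)
     - (if t == i.+1 then x else 0).
Proof.
move=> hi; rewrite /cartanA.
case E1: (i == t); case E2: (i == t.+1); case E3: (t == i.+1); case E4: (t == i); case E5: (t == i.-1);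
  move: E1 E2 E3 E4 E5 => /=; lia.
Qed.

Section Main.
Variables (n : nat) (b : nat -> nat -> int).

Lemma bv0s t : bv n b 0 t = 0. Proof. by rewrite /bv /inI. Qed.
Lemma bvs0 s : bv n b s 0 = 0. Proof. by rewrite /bv /inI andbF. Qed.
Lemma bv_big s t : (n.+1 < s + t)%N -> bv n b s t = 0.
Proof. move=> h; rewrite /bv /inI; case: ifP => //; lia. Qed.

Definition D t := \sum_(1 <= s < n.+1) bv n b s t.

Lemma col t a c : (a <= 1)%N -> (n.+1 - t < c)%N ->
  \sum_(a <= s < c) bv n b s t = D t.
Proof.
move=> ha hc; case: t hc => [|t] hc.
  rewrite /D !big1 // => s _; exact: bvs0.
case: (leqP t n) => htn; last first.
  rewrite /D !big1 //; move=> [|s] _; try exact: bv0s; apply: bv_big; lia.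
rewrite /D (@sum_supp _ a c 1 (n.+1 - t)); try lia; last first.
  move=> s [hs|hs]; first by have -> : s = 0%N by lia. by apply: bv_big; lia.
rewrite (@sum_supp _ 1 n.+1 1 (n.+1 - t)) //; try lia.
move=> s [hs|hs]; first by have -> : s = 0%N by lia. by apply: bv_big; lia.
Qed.

Lemma shift (g : nat -> int) c :
  \sum_(1 <= s < c.+1) g s.+1 = \sum_(1 <= s < c.+2) g s - g 1%N.
Proof. by rewrite (@big_nat_recl _ _ _ c.+1) // addrC addKr. Qed.

Lemma inner s i : (1 <= s)%N -> (1 <= i <= n)%N ->
  \sum_(1 <= t < n.+1) (if inI n s t then bv n b s t * cartanA i t else 0)
  = bv n b s i *+ 2 - bv n b s i.-1 - bv n b s i.+1.
Proof.
move=> hs /andP[hi1 hin].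
rewrite (eq_bigr (fun t => (if t == i then bv n b s t *+ 2 else 0) - (if t == i.-1 then bv n b s t else 0)
     - (if t == i.+1 then bv n b s t else 0))); last first.
  move=> t _; case hI: (inI n s t); first exact: cartan_split.
  by rewrite /bv hI mul0rn !if_same !subr0.
rewrite !sumrB !sum_if_eq.
have -> : (1 <= i < n.+1)%N by lia.
congr (_ - _ - _).
  case: ifP => h1 //; by (have -> : i.-1 = 0%N by lia); rewrite bvs0.
case: ifP => h2 //.
by rewrite (@bv_big s i.+1) //; lia.
Qed.

Lemma wt_id i : (1 <= i <= n)%N ->
  pair_wt n i b = - (Sigma n i b 1 + Sigma_star n i b 1).
Proof.
move=> hi.
rewrite /pair_wt (eq_big_nat _ _ (fun s hs => @inner s i (proj1 (andP hs)) hi)).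
rewrite !sumrB !sumrMnl -/(D i) -/(D i.-1) -/(D i.+1).
rewrite /Sigma /partial big_split /= !sumrB (shift (fun s => bv n b s i.-1)) (shift (fun s => bv n b s i)).
rewrite /Sigma_star big_nat1 /partial_star bv0s bv0s subSS subn0.
rewrite !col; try lia.
Qed.

End Main.

Theorem proposition6p7 (n i : nat) (b : nat -> nat -> int) :
  (1 <= i <= n)%N -> inBinf n b ->
  [/\ jump n i b = (eps n i b - Sigma n i b 1) + (eps_star n i b - Sigma_star n i b 1),
      0 <= jump n i b
    & jump n i b = 0 -> forall s t, f_tilde n i b s t = f_tilde_star n i b s t].
Proof.
move=> hi _.
have J : jump n i b = (eps n i b - Sigma n i b 1) + (eps_star n i b - Sigma_star n i b 1).
  by rewrite /jump wt_id //; lia.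
have G1 : Sigma n i b 1 <= eps n i b by apply: max_range_ge.
have G2 : Sigma_star n i b 1 <= eps_star n i b by apply: max_range_ge.
split => //; first by rewrite J; lia.
move=> J0 s t.
have E1 : Sigma n i b 1 = eps n i b by lia.
have E2 : Sigma_star n i b 1 = eps_star n i b by lia.
have M1 : m_i n i b = 1%N by apply: argmax_range1 => //; lia.
have M2 : m_star n i b = 1%N by apply: argmax_range1 => //; lia.
rewrite /f_tilde /f_tilde_star M1 M2 big_nat1 subSS subn0.
by rewrite /ev /inI /= subr0.
Qed.
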